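(* Let $f:\mathbb{R}^n\times\mathbb{R}^m\to\mathbb{R}$ and $g:\mathbb{R}^n\times\mathbb{R}^m\to\mathbb{R}^p$ be continuous. Assume that for every $x\in\mathbb{R}^n$, $f(x,\cdot)$ is strictly convex, $g(x,\cdot)$ is convex (componentwise), and the problem $\min_{u\in\mathbb{R}^m} f(x,u)$ subject to $g(x,u)\le 0$ has at least one minimizer; let $u^*(x)$ denote the (unique) minimizer. Then, for $x_0\in\mathbb{R}^n$, $u^*$ is locally bounded at $x_0$ if and only if local compact feasibility holds at $x_0$.
   Context: Local compact feasibility (LCF) holds at $x\in\mathbb{R}^n$ if there exist a compact set $K\subset\mathbb{R}^m$ and $\delta>0$ such that for all $y\in\mathbb{R}^n$ with $\|y-x\|<\delta$ there exists $u\in K$ with $g(y,u)\le 0$. A function $\varphi:\mathbb{R}^n\to\mathbb{R}^q$ is locally bounded at $x_0$ if there are a neighborhood $\breve{\mathcal{U}}$ of $x_0$ and $B>0$ with $\|\varphi(x)\|\le B$ for all $x\in\breve{\mathcal{U}}$. *)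

(* Defs.v *)
(* R^k is 'rV[R]_k with its canonical (sup) norm
   and topology; all norms on R^k are equivalent, so local boundedness and
   LCF do not depend on the choice. *)
From HB Require Import structures.
From mathcomp Require Import all_boot all_order all_algebra.
From mathcomp Require Import all_classical all_reals all_analysis.
Set Implicit Arguments. Unset Strict Implicit. Unset Printing Implicit Defensive.
Import Order.TTheory GRing.Theory Num.Theory.
Import numFieldNormedType.Exports.
Local Open Scope classical_set_scope.
Local Open Scope ring_scope.

Definition convex_fun (R : realType) (m : nat) (h : 'rV[R]_m -> R) : Prop :=
  forall (u v : 'rV[R]_m) (t : R), 0 <= t -> t <= 1 ->
    h (t *: u + (1 - t) *: v) <= t * h u + (1 - t) * h v.

Definition strictly_convex_fun (R : realType) (m : nat) (h : 'rV[R]_m -> R) : Prop :=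
  forall (u v : 'rV[R]_m) (t : R), u != v -> 0 < t -> t < 1 ->
    h (t *: u + (1 - t) *: v) < t * h u + (1 - t) * h v.

Definition feasible (R : realType) (n m p : nat)
  (g : 'rV[R]_n -> 'rV[R]_m -> 'rV[R]_p) (y : 'rV[R]_n) (u : 'rV[R]_m) : Prop :=
  forall i : 'I_p, g y u 0 i <= 0.

Definition is_minimizer (R : realType) (n m p : nat)
  (f : 'rV[R]_n -> 'rV[R]_m -> R) (g : 'rV[R]_n -> 'rV[R]_m -> 'rV[R]_p)
  (x : 'rV[R]_n) (u : 'rV[R]_m) : Prop :=
  feasible g x u /\ forall w : 'rV[R]_m, feasible g x w -> f x u <= f x w.

Definition LCF (R : realType) (n m p : nat)
  (g : 'rV[R]_n -> 'rV[R]_m -> 'rV[R]_p) (x : 'rV[R]_n) : Prop :=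
  exists K : set 'rV[R]_m, compact K /\
  exists delta : R, 0 < delta /\
    forall y : 'rV[R]_n, `|y - x| < delta -> exists2 u, K u & feasible g y u.

Definition locally_bounded_at (R : realType) (n q : nat)
  (phi : 'rV[R]_n -> 'rV[R]_q) (x0 : 'rV[R]_n) : Prop :=
  exists U : set 'rV[R]_n, nbhs x0 U /\
  exists B : R, 0 < B /\ forall x, U x -> `|phi x| <= B.

(* Main.v *)
Require Import Defs.
From HB Require Import structures.
From mathcomp Require Import all_boot all_order all_algebra.
From mathcomp Require Import all_classical all_reals all_analysis.
Import Order.TTheory GRing.Theory Num.Theory.
Import numFieldNormedType.Exports.
Local Open Scope classical_set_scope.
Local Open Scope ring_scope.
From mathcomp Require Import lra.


Set Implicit Arguments. Unset Strict Implicit.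
Section H.
Variable R : realType.

Lemma comb_eq m (u v : 'rV[R]_m) (t : R) : t *: u + (1 - t) *: v = v + t *: (u - v).
Proof. by rewrite scalerBl scale1r scalerBr addrCA. Qed.

Lemma sc_conv m (h : 'rV[R]_m -> R) : strictly_convex_fun h -> convex_fun h.
Proof.
move=> hs u v t t0 t1.
have [->|uv] := eqVneq u v.
  by rewrite -scalerDl addrC subrK scale1r -mulrDl addrC subrK mul1r.
have [->|tn0] := eqVneq t 0.
  by rewrite scale0r add0r subr0 scale1r mul0r add0r mul1r.
have [->|tn1] := eqVneq t 1.
  by rewrite scale1r subrr scale0r addr0 mul1r mul0r addr0.
apply/ltW/hs => //; first by rewrite lt_neqAle eq_sym tn0.
by rewrite lt_neqAle tn1.
Qed.

Lemma seg_le m (h : 'rV[R]_m -> R) u v t : convex_fun h -> 0 <= t -> t <= 1 ->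
  h (v + t *: (u - v)) <= h v + t * (h u - h v).
Proof.
move=> hc t0 t1; rewrite -comb_eq; apply: le_trans (hc u v t t0 t1) _.
by rewrite mulrBr mulrBl mul1r addrCA addrA. 
Qed.

Lemma seg_feas n m p (g : 'rV[R]_n -> 'rV[R]_m -> 'rV[R]_p) x u v t :
  (forall i, convex_fun (fun u => g x u 0 i)) ->
  feasible g x u -> feasible g x v -> 0 <= t -> t <= 1 ->
  feasible g x (v + t *: (u - v)).
Proof.
move=> gc fu fv t0 t1 i; apply: le_trans (@seg_le _ _ u v t (gc i) t0 t1) _ => /=.
have := fu i; have := fv i; nra.
Qed.

Lemma bound_of (V : normedModType R) (A : set V) : compact A ->
  exists2 B, 0 < B & forall x, A x -> `|x| <= B.
Proof.
move=> /compact_bounded bA.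
have [B [B0 HB]] := filter_ex (filterI (nbhs_pinfty_gt (@real0 R)) bA).
by exists B.
Qed.

Lemma pair_cont (T U : topologicalType) (a : T) : continuous (fun u : U => (a, u)).
Proof. move=> u; apply: cvg_pair; [exact: cvg_cst | exact: cvg_id]. Qed.

End H.

Set Implicit Arguments. Unset Strict Implicit.

Lemma sphere_compact (R : realType) m (c : R) :
  compact [set e : 'rV[R]_m | `|e| = c].
Proof.
apply: bounded_closed_compact.
  rewrite /= /bounded_near; near=> M => x /= ->; near: M.
  apply: nbhs_pinfty_ge; exact: num_real.
have := @preimage_closed _ _ (@Num.norm R 'rV[R]_m) [set x | x = c].
apply => [x _|]; last exact: closed_eq.
exact: norm_continuous.
Unshelve. all: by end_near. Qed.

Lemma transl_cont (R : realType) m (u0 : 'rV[R]_m) : continuous (fun e => u0 + e).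
Proof.
move=> x; exact: (@continuousD _ _ _ (fun=> u0) id x (@cst_continuous _ _ u0 x) (@cvg_id _ _)).
Qed.

Lemma levelA (R : realType) m (h : 'rV[R]_m -> R) (C : set 'rV[R]_m) (u0 : 'rV[R]_m) :
  continuous h -> strictly_convex_fun h -> closed C ->
  (forall u v t, C u -> C v -> 0 <= t -> t <= 1 -> C (v + t *: (u - v))) ->
  C u0 -> (forall w, C w -> h u0 <= h w) ->
  forall M, exists r, forall w, C w -> r <= `|w - u0| -> M < h w.
Proof.
move=> hc hs Ccl Ccv Cu0 hmin M.
pose S := [set e : 'rV[R]_m | `|e| = 1] `&` [set e | C (u0 + e)].
have Sc : compact S.
  apply: compact_closedI; first exact: sphere_compact.
  apply: (preimage_closed (f := fun e => u0 + e)) => // x _.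
  exact: transl_cont.
have Spos : forall e, S e -> h u0 < h (u0 + e).
  move=> e [e1 Ce]; rewrite ltNge; apply/negP => hle.
  have ne : u0 + e != u0.
    apply/negP => /eqP/(congr1 (fun z => z - u0)).
    rewrite addrAC !subrr add0r => e0; by move: e1; rewrite /= e0 normr0 => /eqP; rewrite eq_sym oner_eq0.
  have k0 : (0 : R) < 2^-1 by rewrite invr_gt0 ltr0n.
  have k1 : (2^-1 : R) < 1 by rewrite invf_lt1 // ltr1n.
  have := hs (u0 + e) u0 (2^-1) ne k0 k1; rewrite comb_eq => hlt.
  have := hmin _ (Ccv _ _ (2^-1) Ce Cu0 (ltW k0) (ltW k1)).
  move: hlt hle k0 k1; set a := h (u0 + e); set b := h u0; set c := h _; set k : R := 2^-1.
  nra.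
have tube : \forall eps \near 0^'+, S `<=` (fun e => h u0 + eps < h (u0 + e)).
  apply: (proj1 (compact_near_coveringP S) Sc R (0^'+) (fun eps e => h u0 + eps < h (u0 + e))).
  move=> e Se; have d0 := Spos e Se.
  set d := h (u0 + e) - h u0.
  have hce : {for e, continuous (h \o (fun e => u0 + e))}.
    exact: (continuous_comp (@transl_cont R m u0 e) (hc (u0 + e))).
  near=> e' eps.
  have H1 : h (u0 + e) - d / 2 < h (u0 + e').
    near: e'; apply: (cvgr_gt _ hce); rewrite ltrBlDr ltrDl; apply: divr_gt0 => //.
    by rewrite subr_gt0.
  have H2 : eps < d / 2.
    near: eps; apply: nbhs_right_lt; apply: divr_gt0 => //; by rewrite subr_gt0.
  move: H1 H2; rewrite /d /=; lra.
near (0 : R)^'+ => eps.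
have Heps : S `<=` (fun e => h u0 + eps < h (u0 + e)) by near: eps; exact: tube.
have eps0 : 0 < eps by near: eps; exact: nbhs_right_gt.
exists (Num.max 1 ((M - h u0) / eps)) => w Cw.
rewrite ge_max => /andP[s1 s2].
set s := `|w - u0| in s1 s2 *.
have s0 : 0 < s by apply: lt_le_trans ltr01 s1.
have t0 : 0 <= s^-1 by rewrite invr_ge0 ltW.
have t1 : s^-1 <= 1 by rewrite invf_le1.
have Se : S (s^-1 *: (w - u0)).
  split; last exact: (Ccv w u0 s^-1 Cw Cu0 t0 t1).
  by rewrite /= normrZ ger0_norm // mulVf // gt_eqF.
have := Heps _ Se.
have := @seg_le R m h w u0 s^-1 (sc_conv hs) t0 t1.
set X := h w - h u0 => Hle Hlt.
have Hx : eps < s^-1 * X by move: Hle Hlt; lra.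
have : s * eps < X.
  have : s * eps < s * (s^-1 * X) by rewrite ltr_pM2l.
  by rewrite mulrA mulfV ?gt_eqF // mul1r.
move: s2; rewrite ler_pdivrMr // => s2.
rewrite /X; lra.
Unshelve. all: by end_near. Qed.

Unset Implicit Arguments.
Set Strict Implicit.

Lemma cont_aux (R : realType) n m (T : topologicalType)
  (F2 : 'rV[R]_n * 'rV[R]_m -> T) : continuous F2 ->
  continuous (fun w : ('rV[R]_m * 'rV[R]_m) * 'rV[R]_n => F2 (w.2, w.1.1)) /\
  continuous (fun w : ('rV[R]_m * 'rV[R]_m) * 'rV[R]_n => F2 (w.2, w.1.1 + w.1.2)).
Proof.
move=> Fc; split => w.
  apply: (@continuous_comp _ _ _ (fun w : ('rV[R]_m * 'rV[R]_m) * 'rV[R]_n => (w.2, w.1.1)) F2 w _ (Fc _)).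
  have H1 : (fun w : ('rV[R]_m * 'rV[R]_m) * 'rV[R]_n => w.2) @ w --> w.2 by exact: cvg_snd.
  have H2 : (fun w : ('rV[R]_m * 'rV[R]_m) * 'rV[R]_n => w.1.1) @ w --> w.1.1 by exact: (cvg_comp _ _ cvg_fst cvg_fst).
  have := cvg_pair H1 H2. exact.
apply: (@continuous_comp _ _ _ (fun w : ('rV[R]_m * 'rV[R]_m) * 'rV[R]_n => (w.2, w.1.1 + w.1.2)) F2 w _ (Fc _)).
have H1 : (fun w : ('rV[R]_m * 'rV[R]_m) * 'rV[R]_n => w.2) @ w --> w.2 by exact: cvg_snd.
have H2 : (fun w : ('rV[R]_m * 'rV[R]_m) * 'rV[R]_n => w.1.1) @ w --> w.1.1 by exact: (cvg_comp _ _ cvg_fst cvg_fst).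
have H3 : (fun w : ('rV[R]_m * 'rV[R]_m) * 'rV[R]_n => w.1.2) @ w --> w.1.2 by exact: (cvg_comp _ _ cvg_fst cvg_snd).
have := cvg_pair H1 (cvgD H2 H3). exact.
Qed.

Theorem proposition3p7 (R : realType) (n m p : nat)
  (f : 'rV[R]_n -> 'rV[R]_m -> R) (g : 'rV[R]_n -> 'rV[R]_m -> 'rV[R]_p)
  (ustar : 'rV[R]_n -> 'rV[R]_m) :
  continuous (fun z : 'rV[R]_n * 'rV[R]_m => f z.1 z.2) ->
  continuous (fun z : 'rV[R]_n * 'rV[R]_m => g z.1 z.2) ->
  (forall x, strictly_convex_fun (f x)) ->
  (forall x (i : 'I_p), convex_fun (fun u => g x u 0 i)) ->
  (forall x, is_minimizer f g x (ustar x)) ->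
  forall x0 : 'rV[R]_n, locally_bounded_at ustar x0 <-> LCF g x0.
Proof.
move=> fc gc fsc gcv hmin x0; split.
  move=> [U [nU [B [B0 HB]]]].
  have /nbhs_ballP [e e0 HU] := nU.
  exists [set u : 'rV[R]_m | `|u| <= B]; split.
    apply: bounded_closed_compact.
      rewrite /= /bounded_near; near=> M => x /= xB; apply: le_trans xB _.
      near: M; apply: nbhs_pinfty_ge; exact: num_real.
    have := @preimage_closed _ _ (@Num.norm R 'rV[R]_m) [set x | x <= B].
    apply => [x _|]; [exact: norm_continuous | exact: closed_le].
  exists e; split => // y hy.
  exists (ustar y); last exact: (hmin y).1.
  apply: HB; apply: HU; rewrite -ball_normE /= distrC; exact: hy.
move=> [K [cK [delta [d0 HK]]]].
set u0 := ustar x0.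
have fcx : forall x, continuous (f x).
  move=> x u; exact: (continuous_comp (@pair_cont _ _ x u) (fc (x, u))).
have gci : forall i, continuous (fun z : 'rV[R]_n * 'rV[R]_m => g z.1 z.2 0 i).
  move=> i z; exact: (continuous_comp (gc z) (@coord_continuous R 1 p 0 i (g z.1 z.2))).
have C0cl : closed (feasible g x0).
  have -> : feasible g x0 = \bigcap_(i in [set: 'I_p]) ((fun u => g x0 u 0 i) @^-1` [set r | r <= 0]).
    apply/funext => u; apply/propext; split => [H i _|H i]; [exact: H | exact: H].
  apply: closed_bigI => i _; apply: preimage_closed => [u _|]; last exact: closed_le.
  exact: (continuous_comp (@pair_cont _ _ x0 u) (gci i (x0, u))).
have Ccv : forall u v t, feasible g x0 u -> feasible g x0 v -> 0 <= t -> t <= 1 ->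
    feasible g x0 (v + t *: (u - v)).
  move=> u v t fu fv t0 t1; exact: seg_feas.
have [M HM] : exists M, forall v, K v -> f x0 v <= M.
  have : compact [set f x0 x | x in K].
    by apply: continuous_compact => //; apply: continuous_subspaceT; exact: fcx.
  move=> /bound_of [M _ HM]; exists M => v Kv.
  apply: le_trans (ler_norm _) (HM _ _); by exists v.
have [r Hr] := levelA (fcx x0) (fsc x0) C0cl Ccv (hmin x0).1 (hmin x0).2 M.
have [Kb Kb0 HKb] := bound_of cK.
set R1 := Num.max r 0 + Kb + `|u0| + 1.
have R10 : 0 < R1.
  have : 0 <= Num.max r 0 by rewrite le_max lexx orbT.
  have := normr_ge0 u0; rewrite /R1; lra.
pose Q := K `*` [set d : 'rV[R]_m | `|d| = R1].
have cQ : compact Q by apply: compact_setX => //; exact: sphere_compact.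
pose P := fun y (z : 'rV[R]_m * 'rV[R]_m) => ~ (feasible g y z.1 /\
  feasible g y (z.1 + z.2) /\ f y (z.1 + z.2) <= f y z.1).
have tube : \forall y \near x0, Q `<=` P y.
  apply: (proj1 (compact_near_coveringP Q) cQ _ (nbhs x0) P).
  move=> [v d] [/= Kv dR].
  have [fv|nfv] := pselect (feasible g x0 v); last first.
    have /existsNP [i /negP] := nfv; rewrite -ltNge => gi.
    have cphi := (@cont_aux R n m R _ (gci i)).1 ((v, d), x0).
    have H := @cvgr_gt _ _ _ (nbhs_filter ((v, d), x0)) _ _ cphi _ gi.
    rewrite /prop_near2; apply: (filterS _ H) => -[[v' d'] y] /= hpos [fv' _].
    by have := fv' i; rewrite leNgt hpos.
  have [fvd|nfvd] := pselect (feasible g x0 (v + d)); last first.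
    have /existsNP [i /negP] := nfvd; rewrite -ltNge => gi.
    have cphi := (@cont_aux R n m R _ (gci i)).2 ((v, d), x0).
    have H := @cvgr_gt _ _ _ (nbhs_filter ((v, d), x0)) _ _ cphi _ gi.
    rewrite /prop_near2; apply: (filterS _ H) => -[[v' d'] y] /= hpos [_ [fv' _]].
    by have := fv' i; rewrite leNgt hpos.
  have flt : f x0 v < f x0 (v + d).
    apply: le_lt_trans (HM v Kv) (Hr _ fvd _).
    have hvb := HKb v Kv.
    have : `|d| <= `|v + d - u0| + `|v| + `|u0|.
      have e : (v + d - u0) + (u0 - v) = d by rewrite addrA subrK addrC addKr.
      have h1 := ler_normD (v + d - u0) (u0 - v); rewrite e in h1.
      have h2 := ler_normB u0 v; lra.
    have : r <= Num.max r 0 by rewrite le_max lexx.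
    move: dR; rewrite /R1; lra.
  have cphi : {for ((v, d), x0), continuous (fun w : ('rV[R]_m * 'rV[R]_m) * 'rV[R]_n =>
      f w.2 (w.1.1 + w.1.2) - f w.2 w.1.1)}.
    apply: continuousB.
      exact: ((@cont_aux R n m R _ fc).2 ((v, d), x0)).
    exact: ((@cont_aux R n m R _ fc).1 ((v, d), x0)).
  have H := @cvgr_gt _ _ _ (nbhs_filter ((v, d), x0)) _ _ cphi 0.
  rewrite /= subr_gt0 in H; have {}H := H flt.
  rewrite /prop_near2; apply: (filterS _ H) => -[[v' d'] y] /= hpos [_ [_ hle]].
  by move: hpos; rewrite subr_gt0 ltNge hle.
exists ((fun y => Q `<=` P y) `&` [set y | `|y - x0| < delta]); split.
  apply: filterI => //; apply/nbhs_ballP; exists delta => // y.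
  by rewrite -ball_normE /= distrC.
exists (Kb + R1); split; first lra.
move=> y [HQ hy].
have [v Kv fv] := HK y hy.
have [fu fmin] := hmin y.
set u := ustar y in fu fmin *.
have vb := HKb v Kv.
have hn : `|u| <= `|u - v| + `|v|.
  by rewrite -{1}(subrK v u) ler_normD.
have [le|lt] := leP `|u - v| R1; first lra.
exfalso.
set s := `|u - v| in lt hn.
have s0 : 0 < s by apply: lt_trans R10 lt.
set t := R1 / s.
have t0 : 0 <= t by rewrite /t divr_ge0 // ltW.
have t1 : t <= 1 by rewrite /t ler_pdivrMr // mul1r ltW.
apply: (HQ (v, t *: (u - v))).
  split => //=; rewrite normrZ ger0_norm // /t -mulrA mulVf ?mulr1 //.
  by rewrite gt_eqF.
split => /=; first exact: fv.
split; first exact: seg_feas.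
have := @seg_le R m (f y) u v t (sc_conv (fsc y)) t0 t1.
have := fmin v fv; nra.
Unshelve. all: by end_near. Qed.
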